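(* Let $s\ge2$ be an integer. For every $C_1>0$ there exists $C_2>0$, and for every $C_2'>0$ there exists $C_1'>0$ (all depending only on $s$ and the given constant), such that for every integer $N\ge1$, every $\varepsilon>0$ and every $f\colon\mathbb{N}_0\to\mathbb{U}$: (i) if $\|f\|_{U^s[N]}\ge1-C_1\varepsilon$ then $\operatorname{Re} E_N(f)\ge 1-C_2\varepsilon$; (ii) if $\operatorname{Re}E_N(f)\ge1-C_2'\varepsilon$ then $\|f\|_{U^s[N]}\ge 1-C_1'\varepsilon$, where $$E_N(f)=\frac{1}{|D_N|}\sum_{\vec e\in D_N}\prod_{\omega\in\{0,1\}^s}\mathcal{C}^{|\omega|}f(e_0+\omega_1e_1+\dots+\omega_se_s),\qquad D_N=\Big\{\vec e=(e_0,\dots,e_s)\in[N]^{s+1}:\sum_{i=0}^se_i<N\Big\}.$$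
   Context: $\mathbb{U}=\{z\in\mathbb{C}:|z|=1\}$, $[N]=\{0,\dots,N-1\}$, $\mathcal{C}$ is complex conjugation, $|\omega|=\sum_i\omega_i$. Let $\Pi(N)$ be the set of $\vec n=(n_0,\dots,n_s)\in\mathbb{Z}^{s+1}$ with $n_0+\omega_1n_1+\dots+\omega_sn_s\in[N]$ for all $\omega\in\{0,1\}^s$; the Gowers norm is $\|f\|_{U^s[N]}\ge0$ with $\|f\|_{U^s[N]}^{2^s}=\frac{1}{|\Pi(N)|}\sum_{\vec n\in\Pi(N)}\prod_{\omega}\mathcal{C}^{|\omega|}f(n_0+\omega_1n_1+\dots+\omega_sn_s)$. *)

(* Defs.v *)
From HB Require Import structures.
From mathcomp Require Import all_boot all_order all_algebra.
From mathcomp Require Import reals complex.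
Set Implicit Arguments. Unset Strict Implicit. Unset Printing Implicit Defensive.
Import Order.TTheory GRing.Theory Num.Theory.
Local Open Scope ring_scope.

Definition wt (s : nat) (w : {ffun 'I_s -> bool}) : nat := \sum_(i < s) (w i : nat).

Definition conjit (R : realType) (k : nat) (z : R[i]) : R[i] := iter k (fun x => x^*) z.

(* Pi(N): vectors (n_0,...,n_s) in Z^{s+1}.  Since n_0 in [N] and n_0+n_i in [N],
   every coordinate lies in [-N, N); we encode n_i = k_i - N with k_i : 'I_(2N). *)
Definition zcoord (s N : nat) (k : {ffun 'I_s.+1 -> 'I_(2 * N)%N}) (i : 'I_s.+1) : int :=
  (k i)%:Z - N%:Z.

Definition cornerZ (s N : nat) (k : {ffun 'I_s.+1 -> 'I_(2 * N)%N}) (w : {ffun 'I_s -> bool}) : int :=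
  zcoord k ord0 + \sum_(i < s) (w i : nat)%:Z * zcoord k (lift ord0 i).

Definition inPi (s N : nat) (k : {ffun 'I_s.+1 -> 'I_(2 * N)%N}) : bool :=
  [forall w : {ffun 'I_s -> bool}, (0 <= cornerZ k w) && (cornerZ k w < N%:Z)].

Definition Pi_card (s N : nat) : nat := #|[pred k : {ffun 'I_s.+1 -> 'I_(2 * N)%N} | inPi k]|.

Definition gowers_pow (R : realType) (s N : nat) (f : nat -> R[i]) : R[i] :=
  (Pi_card s N)%:R^-1 *
  \sum_(k : {ffun 'I_s.+1 -> 'I_(2 * N)%N} | inPi k)
     \prod_(w : {ffun 'I_s -> bool}) conjit (wt w) (f `|cornerZ k w|%N).

Definition gowers (R : realType) (s N : nat) (f : nat -> R[i]) : R[i] :=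
  (2 ^ s)%N.-root (gowers_pow s N f).

Definition inD (s N : nat) (e : {ffun 'I_s.+1 -> 'I_N}) : bool :=
  (\sum_(i < s.+1) (e i : nat) < N)%N.

Definition cornerN (s N : nat) (e : {ffun 'I_s.+1 -> 'I_N}) (w : {ffun 'I_s -> bool}) : nat :=
  (e ord0 + \sum_(i < s) (w i : nat) * e (lift ord0 i))%N.

Definition EN (R : realType) (s N : nat) (f : nat -> R[i]) : R[i] :=
  (#|[pred e : {ffun 'I_s.+1 -> 'I_N} | inD e]|)%:R^-1 *
  \sum_(e : {ffun 'I_s.+1 -> 'I_N} | inD e)
     \prod_(w : {ffun 'I_s -> bool}) conjit (wt w) (f (cornerN e w)).

(* Main.v *)
Require Import Defs.
From HB Require Import structures.
From mathcomp Require Import all_boot all_order all_algebra.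
From mathcomp Require Import reals complex.
From mathcomp Require Import zify ring lra.
Import Order.TTheory GRing.Theory Num.Theory.
Set Implicit Arguments. Unset Strict Implicit. Unset Printing Implicit Defensive.
Local Open Scope ring_scope.

Section Basic.
Variable R : realType.

Lemma conjitE (n : nat) (z : R[i]) : conjit n z = if odd n then z^* else z.
Proof.
rewrite /conjit; elim: n => [|n IH] //=; rewrite IH; case: (odd n) => //=.
by rewrite conjCK.
Qed.

Lemma norm_conjit n (z : R[i]) : `|conjit n z| = `|z|.
Proof. by rewrite conjitE; case: ifP => // _; rewrite norm_conjC. Qed.

Lemma Re_conjit n (z : R[i]) : complex.Re (conjit n z) = complex.Re z.
Proof. by rewrite conjitE; case: ifP => // _; case: z. Qed.

Lemma conjit_prod (I : finType) (P : pred I) n (F : I -> R[i]) :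
  conjit n (\prod_(i | P i) F i) = \prod_(i | P i) conjit n (F i).
Proof.
rewrite conjitE; case: ifP => h; last by apply: eq_bigr => i _; rewrite conjitE h.
by rewrite rmorph_prod; apply: eq_bigr => i _; rewrite conjitE h.
Qed.

Lemma Re_bounds (z : R[i]) : `|z| = 1 -> -1 <= complex.Re z <= 1.
Proof.
move=> hz; have := normc_ge_Re z; rewrite hz; have ->: (1 : R[i]) = ((1 : R)%:C)%C by []; rewrite lecR.
by rewrite ler_norml.
Qed.

Definition xorw (s : nat) (a b : {ffun 'I_s -> bool}) : {ffun 'I_s -> bool} :=
  [ffun i => a i (+) b i].

Lemma xorwK s (b : {ffun 'I_s -> bool}) : involutive (fun a => xorw a b).
Proof. by move=> a; apply/ffunP => i; rewrite !ffunE addbK. Qed.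

Lemma odd_wt s (a : {ffun 'I_s -> bool}) :
  odd (wt a) = \big[addb/false]_(i < s) a i.
Proof.
rewrite /wt (big_morph odd oddD (erefl (odd 0))); apply: eq_bigr => i _.
by case: (a i).
Qed.

Lemma odd_wt_xor s (a b : {ffun 'I_s -> bool}) :
  odd (wt (xorw a b)) = odd (wt a) (+) odd (wt b).
Proof.
rewrite !odd_wt -big_split /=; apply: eq_bigr => i _; by rewrite ffunE.
Qed.

Lemma conjit_xor s (a b : {ffun 'I_s -> bool}) (z : R[i]) :
  conjit (wt (xorw a b)) z = conjit (wt b) (conjit (wt a) z).
Proof.
rewrite !conjitE odd_wt_xor; case: (odd (wt a)); case: (odd (wt b)) => //=.
by rewrite conjCK.
Qed.

End Basic.

Lemma sum_inj_le (R : realType) (A B : finType) (PA : pred A) (PB : pred B) (h : A -> B) (F : B -> R) :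
  {in PA &, injective h} -> (forall a, PA a -> PB (h a)) -> (forall b, PB b -> 0 <= F b) ->
  \sum_(a | PA a) F (h a) <= \sum_(b | PB b) F b.
Proof.
move=> hinj hP hF.
have -> : \sum_(a | PA a) F (h a) = \sum_(a in PA) F (h a) by [].
rewrite -(big_imset _ hinj) [X in _ <= X](bigID (mem (h @: PA))) /=.
rewrite (eq_bigl (fun b => PB b && (b \in h @: PA))); last first.
  move=> b /=; apply/idP/andP => [hb|[]//]; split => //.
  by case/imsetP: hb => a ha ->; apply: hP.
by rewrite lerDl sumr_ge0 // => b /andP[/hF].
Qed.


Section Refl.
Variables (R : realType) (s N' : nat) (f : nat -> R[i]).
Local Notation N := N'.+1.
Local Notation K := {ffun 'I_s.+1 -> 'I_(2 * N)}.
Local Notation E := {ffun 'I_s.+1 -> 'I_N}.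
Local Notation W := {ffun 'I_s -> bool}.

Definition negpat (k : K) : W := [ffun i => zcoord k (lift ord0 i) < 0].
Definition zerow : W := [ffun _ => false].
Definition unitw (i : 'I_s) : W := [ffun j => j == i].

Lemma cornerZ0 (k : K) : cornerZ k zerow = zcoord k ord0.
Proof. by rewrite /cornerZ big1 ?addr0 // => i _; rewrite ffunE mul0r. Qed.

Lemma cornerZunit (k : K) i :
  cornerZ k (unitw i) = zcoord k ord0 + zcoord k (lift ord0 i).
Proof.
rewrite /cornerZ (bigD1 i) //= big1 ?addr0 => [|j hj]; first by rewrite ffunE eqxx mul1r.
by rewrite ffunE (negbTE hj) mul0r.
Qed.

Lemma Pi_corner (k : K) w : inPi k -> 0 <= cornerZ k w < N%:Z.
Proof. by move/forallP/(_ w). Qed.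

Lemma Pi_coord0 (k : K) : inPi k -> 0 <= zcoord k ord0 < N%:Z.
Proof. by move=> h; rewrite -cornerZ0 Pi_corner. Qed.

Lemma Pi_coordS (k : K) i : inPi k -> (`|zcoord k (lift ord0 i)|%N < N)%N.
Proof.
move=> h; have := Pi_coord0 h; have := Pi_corner (unitw i) h.
rewrite cornerZunit; lia.
Qed.

Definition rr (k : K) : E :=
  [ffun j => inord (if j == ord0 then `|cornerZ k (negpat k)|%N else `|zcoord k j|%N)].

Lemma rr0 (k : K) : inPi k -> ((rr k ord0 : nat) : int) = cornerZ k (negpat k).
Proof.
move=> h; rewrite ffunE eqxx inordK; have := Pi_corner (negpat k) h; lia.
Qed.

Lemma rrS (k : K) i : inPi k -> ((rr k (lift ord0 i) : nat) : int) = `|zcoord k (lift ord0 i)|.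
Proof.
move=> h; rewrite ffunE (_ : (lift ord0 i == ord0) = false); last first.
  by apply/negbTE; rewrite eq_sym neq_lift.
rewrite inordK; first lia.
exact: Pi_coordS.
Qed.

Lemma PoszSum (I : finType) (P : pred I) (F : I -> nat) :
  ((\sum_(i | P i) F i)%N : int) = \sum_(i | P i) (F i : int).
Proof. by rewrite (big_morph Posz PoszD (erefl (Posz 0))). Qed.

Lemma cornerZ_rr (k : K) w : inPi k ->
  cornerZ k w = (cornerN (rr k) (xorw w (negpat k)) : int).
Proof.
move=> h; rewrite /cornerN PoszD rr0 // PoszSum.
rewrite /cornerZ -[RHS]addrA; congr (_ + _); rewrite -big_split /=.
apply: eq_bigr => i _.
rewrite PoszM rrS // !ffunE; case: (w i); case: ltrP => hn /=; lia.
Qed.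

Definition PK (k : K) : R[i] :=
  \prod_(w : W) conjit (wt w) (f `|cornerZ k w|%N).
Definition PD (e : E) : R[i] :=
  \prod_(w : W) conjit (wt w) (f (cornerN e w)).

Lemma PK_rr (k : K) : inPi k -> PK k = conjit (wt (negpat k)) (PD (rr k)).
Proof.
move=> h; rewrite /PK /PD conjit_prod.
rewrite (eq_bigr (fun w => conjit (wt w) (f (cornerN (rr k) (xorw w (negpat k)))))); last first.
  by move=> w _; rewrite cornerZ_rr.
rewrite [RHS](reindex_inj (can_inj (xorwK (negpat k)))) /=.
by apply: eq_bigr => w _; rewrite -conjit_xor xorwK.
Qed.

Lemma PKnorm (k : K) : (forall n, `|f n| = 1) -> `|PK k| = 1.
Proof.
move=> hf; rewrite /PK normr_prod big1 // => w _.
by rewrite norm_conjit hf.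
Qed.

Lemma PDnorm (e : E) : (forall n, `|f n| = 1) -> `|PD e| = 1.
Proof.
move=> hf; rewrite /PD normr_prod big1 // => w _.
by rewrite norm_conjit hf.
Qed.

Lemma Re_PK (k : K) : inPi k -> complex.Re (PK k) = complex.Re (PD (rr k)).
Proof. by move=> h; rewrite PK_rr // Re_conjit. Qed.

Definition onesw : W := [ffun _ => true].

Lemma sum_cornerN (e : E) : (\sum_(j < s.+1) (e j : nat))%N = cornerN e onesw.
Proof.
rewrite big_ord_recl /cornerN; congr (_ + _)%N.
by apply: eq_bigr => i _; rewrite ffunE mul1n.
Qed.

Lemma cornerN_le (e : E) w : (cornerN e w <= \sum_(j < s.+1) (e j : nat))%N.
Proof.
rewrite sum_cornerN /cornerN leq_add2l; apply: leq_sum => i _.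
by rewrite ffunE mul1n; case: (w i); rewrite ?mul1n ?mul0n.
Qed.

Lemma rr_inD (k : K) : inPi k -> inD (rr k).
Proof.
move=> h; rewrite /inD sum_cornerN.
have := Pi_corner [ffun i => ~~ negpat k i] h.
rewrite cornerZ_rr // (_ : xorw _ _ = onesw); first lia.
by apply/ffunP => i; rewrite !ffunE addNb addbb.
Qed.

Lemma iiP (x : 'I_N) : (x + N < 2 * N)%N.
Proof. have := ltn_ord x; lia. Qed.

Definition ii (e : E) : K := [ffun j => Ordinal (iiP (e j))].

Lemma zcoord_ii (e : E) j : zcoord (ii e) j = (e j : nat).
Proof. rewrite /zcoord ffunE /=; lia. Qed.

Lemma cornerZ_ii (e : E) w : cornerZ (ii e) w = (cornerN e w : int).
Proof.
rewrite /cornerZ /cornerN PoszD PoszSum zcoord_ii; congr (_ + _).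
by apply: eq_bigr => i _; rewrite zcoord_ii PoszM.
Qed.

Lemma ii_Pi (e : E) : inD e -> inPi (ii e).
Proof.
move=> h; apply/forallP => w; rewrite cornerZ_ii.
have := cornerN_le e w; move: h; rewrite /inD; lia.
Qed.

Lemma negpat_ii (e : E) : negpat (ii e) = zerow.
Proof. by apply/ffunP => i; rewrite !ffunE zcoord_ii. Qed.

Lemma rr_ii (e : E) : inD e -> rr (ii e) = e.
Proof.
move=> h; apply/ffunP => j; apply: val_inj => /=.
rewrite ffunE; case: eqP => [->|_].
  rewrite negpat_ii cornerZ0 zcoord_ii /= inordK //.
by rewrite zcoord_ii /= inordK.
Qed.

Lemma zcoordS_rec (k : K) i : inPi k ->
  zcoord k (lift ord0 i) = if negpat k i then - ((rr k (lift ord0 i) : nat) : int)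
                           else ((rr k (lift ord0 i) : nat) : int).
Proof. move=> h; rewrite rrS // ffunE; case: ltrP => /= hn; lia. Qed.

Lemma zcoord0_rec (k : K) : inPi k ->
  zcoord k ord0 = ((rr k ord0 : nat) : int) -
     \sum_(i < s) (negpat k i : nat)%:Z * zcoord k (lift ord0 i).
Proof. move=> h; rewrite rr0 // /cornerZ /negpat; set S := (\sum_(i < s) _); lia. Qed.

Lemma rr_inj (k k' : K) : inPi k -> inPi k' -> rr k = rr k' -> negpat k = negpat k' -> k = k'.
Proof.
move=> h h' er en.
have eS : forall i, zcoord k (lift ord0 i) = zcoord k' (lift ord0 i).
  by move=> i; rewrite !zcoordS_rec // er en.
have e0 : zcoord k ord0 = zcoord k' ord0.
  rewrite !zcoord0_rec // er en; congr (_ - _); apply: eq_bigr => i _; by rewrite eS.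
apply/ffunP => j; apply: val_inj.
have : zcoord k j = zcoord k' j.
  case: (unliftP ord0 j) => [i ->|->] //.
by rewrite /zcoord => /addIr [].
Qed.

Lemma cmp1 (G : E -> R) : (forall e, 0 <= G e) ->
  \sum_(e | inD e) G e <= \sum_(k : K | inPi k) G (rr k).
Proof.
move=> hG.
rewrite (eq_bigr (fun e => G (rr (ii e)))); last by move=> e he; rewrite rr_ii.
apply: (sum_inj_le (F := fun k : K => G (rr k))) => //.
- by move=> e e' he he' /(congr1 rr); rewrite !rr_ii.
- by move=> e he; apply: ii_Pi.
Qed.

Lemma cmp2 (G : E -> R) : (forall e, 0 <= G e) ->
  \sum_(k : K | inPi k) G (rr k) <= (\sum_(e | inD e) G e) *+ 2 ^ s.
Proof.
move=> hG.
have -> : (\sum_(e | inD e) G e) *+ 2 ^ s = \sum_(p : E * W | inD p.1) G p.1.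
  rewrite (eq_bigl (fun p : E * W => inD p.1 && predT p.2)); last first.
    by move=> p; rewrite andbT.
  rewrite -(pair_big (fun e : E => inD e) predT (fun (e : E) (_ : W) => G e)) /= -sumrMnl; apply: eq_bigr => e _; rewrite sumr_const card_ffun card_bool card_ord.
  by [].
apply: (sum_inj_le (h := fun k : K => (rr k, negpat k)) (F := fun p : E * W => G p.1)) => //.
- move=> k k' hk hk' [e1 e2]; exact: rr_inj.
- by move=> k hk /=; apply: rr_inD.
Qed.

Lemma Re_scal (n : nat) (z : R[i]) :
  complex.Re ((n%:R)^-1 * z) = (n%:R)^-1 * complex.Re z.
Proof.
have -> : (n%:R : R[i])^-1 = (((n%:R : R)^-1)%:C)%C.
  by rewrite fmorphV rmorph_nat.
by case: z => a b /=; ring.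
Qed.

End Refl.

Section Pos.
Variables (R : realType) (s' N' : nat) (f : nat -> R[i]).
Local Notation s := s'.+1.
Local Notation N := N'.+1.
Local Notation K := {ffun 'I_s.+1 -> 'I_(2 * N)}.
Local Notation W := {ffun 'I_s -> bool}.

Local Notation lst := (@ord_max s').

Definition PKp (k : K) : R[i] :=
  \prod_(w : W) conjit (wt w) (f `|cornerZ k w|%N).

Lemma z0P : (0 < 2 * N)%N. Proof. by []. Qed.
Definition z0 : 'I_(2 * N) := Ordinal z0P.

Definition pip (k : K) : K :=
  [ffun j => if (j == ord0) || (j == ord_max) then z0 else k j].

Lemma updP (x y : 'I_N) : (y + N - x < 2 * N)%N.
Proof. have := ltn_ord x; have := ltn_ord y; lia. Qed.
Lemma updP0 (x : 'I_N) : (x + N < 2 * N)%N.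
Proof. have := ltn_ord x; lia. Qed.

Definition upd (p : K) (x y : 'I_N) : K :=
  [ffun j => if j == ord0 then Ordinal (updP0 x)
             else if j == ord_max then Ordinal (updP x y) else p j].

Definition hq (k : K) : 'I_N * 'I_N :=
  (inord (absz (zcoord k ord0)), inord (absz (zcoord k ord0 + zcoord k ord_max))).

Definition cc (p : K) (w : W) : int :=
  \sum_(i < s | i != lst) (w i : nat)%:Z * zcoord p (lift ord0 i).

Lemma lift_lst : lift ord0 lst = ord_max :> 'I_s.+1.
Proof. by apply: val_inj. Qed.

Lemma ord_max_neq0 : (ord_max == ord0 :> 'I_s.+1) = false.
Proof. by []. Qed.

Lemma zcoord_upd0 p x y : zcoord (upd p x y) ord0 = (x : nat).
Proof. rewrite /zcoord ffunE eqxx /=; lia. Qed.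

Lemma zcoord_updm p x y : zcoord (upd p x y) ord_max = ((y : nat) : int) - ((x : nat) : int).
Proof.
rewrite /zcoord ffunE ord_max_neq0 eqxx /=.
have := ltn_ord x; have := ltn_ord y; lia.
Qed.

Lemma zcoord_updS p x y i : i != lst ->
  zcoord (upd p x y) (lift ord0 i) = zcoord p (lift ord0 i).
Proof.
move=> hi; rewrite /zcoord ffunE.
have -> : (lift ord0 i == ord0) = false by apply/negbTE; rewrite eq_sym neq_lift.
have -> : (lift ord0 i == ord_max) = false.
  apply/negbTE; rewrite -lift_lst; apply: contra hi => /eqP /lift_inj ->.
  by [].
by [].
Qed.

Lemma cornerZ_upd p x y w :
  cornerZ (upd p x y) w = (if w lst then ((y : nat) : int) else ((x : nat) : int)) + cc p w.
Proof.
rewrite /cornerZ zcoord_upd0 (bigD1 lst) //= lift_lst zcoord_updm.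
have -> : \sum_(i < s | i != lst) (w i : nat)%:Z * zcoord (upd p x y) (lift ord0 i) = cc p w.
  by apply: eq_bigr => i hi; rewrite zcoord_updS.
case: (w lst) => /=; lia.
Qed.

Definition setl (w : W) b : W := [ffun i => if i == lst then b else w i].

Lemma cc_setl p w b : cc p (setl w b) = cc p w.
Proof.
apply: eq_bigr => i hi; rewrite ffunE (negbTE hi); by [].
Qed.

Definition AA (p : K) (z : int) : bool :=
  [forall w : W, (0 <= z + cc p w) && (z + cc p w < N%:Z)].

Lemma inPi_upd p x y : inPi (upd p x y) = AA p (x : nat) && AA p (y : nat).
Proof.
apply/forallP/andP => [h|[/forallP hx /forallP hy] w].
  split; apply/forallP => w.
    have := h (setl w false); rewrite cornerZ_upd cc_setl ffunE eqxx; by [].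
  have := h (setl w true); rewrite cornerZ_upd cc_setl ffunE eqxx; by [].
by rewrite cornerZ_upd; case: (w lst); [apply: hy | apply: hx].
Qed.

Definition gg (p : K) (z : int) : R[i] :=
  \prod_(w : W | ~~ w lst) conjit (wt w) (f (absz (z + cc p w))).

Lemma odd_wt_unit : odd (wt (unitw lst)) = true.
Proof.
rewrite odd_wt (bigD1 lst) //= big1 => [|i hi]; first by rewrite ffunE eqxx.
by rewrite ffunE (negbTE hi).
Qed.

Lemma PK_upd p x y : PKp (upd p x y) = gg p (x : nat) * (gg p (y : nat))^*.
Proof.
rewrite /PKp (bigID (fun w : W => w lst)) /= mulrC; congr (_ * _).
  by apply: eq_bigr => w hw; rewrite cornerZ_upd (negbTE hw).
rewrite (reindex_inj (can_inj (xorwK (unitw lst)))) /= /gg rmorph_prod.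
apply: eq_big => [w|w hw]; first by rewrite !ffunE eqxx addbT.
move: hw; rewrite !ffunE eqxx addbT => /negbTE hw; rewrite cornerZ_upd !ffunE eqxx addbT hw /=.
have -> : cc p (xorw w (unitw lst)) = cc p w.
  by apply: eq_bigr => i hi; rewrite !ffunE (negbTE hi) addbF.
by rewrite conjit_xor [conjit (wt (unitw _)) _]conjitE odd_wt_unit.
Qed.

Lemma pip_upd p x y : pip (upd p x y) = pip p.
Proof.
apply/ffunP => j; rewrite !ffunE; case: ifP => // /norP [/negbTE -> /negbTE ->].
by [].
Qed.

Lemma hq_upd p x y : hq (upd p x y) = (x, y).
Proof.
rewrite /hq zcoord_upd0 zcoord_updm.
have hx := ltn_ord x; have hy := ltn_ord y.
congr (_, _); apply: val_inj => /=; rewrite inordK //; lia.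
Qed.

Lemma upd_hq (k : K) : inPi k -> upd (pip k) (hq k).1 (hq k).2 = k.
Proof.
move=> h; apply/ffunP => j; apply: val_inj; rewrite !ffunE.
have h0 := Pi_coord0 h.
have hm : 0 <= zcoord k ord0 + zcoord k ord_max < N%:Z.
  have := Pi_corner (unitw lst) h; by rewrite cornerZunit lift_lst.
case: eqP => [->|/eqP hj0] /=.
  rewrite inordK; last lia.
  move: h0; rewrite /zcoord; lia.
case: eqP => [->|/eqP hjm] /=.
  rewrite !inordK; [|lia|lia].
  move: h0 hm; rewrite /zcoord; lia.
by [].
Qed.

Lemma Pi_sum_ge0 : 0 <= \sum_(k : K | inPi k) PKp k.
Proof.
rewrite (partition_big pip predT) //=; apply: sumr_ge0 => p _.
rewrite (reindex_onto (fun q : 'I_N * 'I_N => upd p q.1 q.2) hq); last first.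
  by move=> k /andP [hk /eqP <-]; apply: upd_hq.
rewrite (eq_bigl (fun q : 'I_N * 'I_N => (pip p == p) && (AA p (q.1 : nat) && AA p (q.2 : nat)))); last first.
  move=> [x y] /=; rewrite inPi_upd pip_upd hq_upd eqxx andbT andbC; by [].
case: (pip p == p) => /=; last by rewrite big_pred0.
rewrite (eq_bigr (fun q : 'I_N * 'I_N => gg p (q.1 : nat) * (gg p (q.2 : nat))^*)); last first.
  by move=> q _; rewrite PK_upd.
rewrite -(pair_big (fun x : 'I_N => AA p (x : nat)) (fun y : 'I_N => AA p (y : nat))
   (fun x y : 'I_N => gg p (x : nat) * (gg p (y : nat))^*)) /=.
rewrite (eq_bigr (fun x : 'I_N => gg p (x : nat) * \sum_(y : 'I_N | AA p (y : nat)) (gg p (y : nat))^*)); last first.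
  by move=> x _; rewrite big_distrr.
by rewrite -big_distrl -rmorph_sum mul_conjC_ge0.
Qed.

End Pos.

Lemma bernoulli (R : realType) (n : nat) (t : R) : 0 <= t -> t <= 1 ->
  1 - n%:R * (1 - t) <= t ^+ n.
Proof.
move=> h0 h1; elim: n => [|n IH]; first by rewrite mul0r subr0 expr0.
rewrite exprS -natr1.
have h2 : t * (1 - n%:R * (1 - t)) <= t * t ^+ n by rewrite ler_wpM2l.
have h3 : 0 <= n%:R * (1 - t) * (1 - t) by rewrite mulr_ge0 ?mulr_ge0 ?subr_ge0.
apply: le_trans h2; nra.
Qed.

Section Key.
Variables (R : realType) (s N' : nat) (f : nat -> R[i]).
Hypothesis hf : forall n, `|f n| = 1.
Local Notation N := N'.+1.
Local Notation K := {ffun 'I_s.+1 -> 'I_(2 * N)}.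
Local Notation E := {ffun 'I_s.+1 -> 'I_N}.

Let dD (e : E) : R := 1 - complex.Re (PD f e).

Lemma dD_ge0 e : 0 <= dD e.
Proof. by rewrite /dD subr_ge0; case/andP: (Re_bounds (PDnorm e hf)). Qed.

Lemma dD_le2 e : dD e <= 2.
Proof. rewrite /dD; case/andP: (Re_bounds (PDnorm e hf)) => h1 h2; lra. Qed.

Let a : R := (#|[pred e : E | inD e]|)%:R.
Let b : R := (Pi_card s N)%:R.
Let x : R := \sum_(e | inD e) dD e.
Let y : R := \sum_(k : K | inPi k) dD (rr k).

Lemma a_eq : a = \sum_(e : E | inD e) 1.
Proof. by rewrite sumr_const. Qed.
Lemma b_eq : b = \sum_(k : K | inPi k) 1.
Proof. by rewrite sumr_const. Qed.

Lemma a_gt0 : 0 < a.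
Proof.
rewrite /a ltr0n; apply/card_gt0P; exists [ffun _ => ord0].
rewrite inE /inD big1 // => i _; by rewrite ffunE.
Qed.

Lemma ab1 : a <= b.
Proof. by rewrite a_eq b_eq; apply: (cmp1 (G := fun _ => 1)). Qed.
Lemma ab2 : b <= a * (2 ^ s)%:R.
Proof. by rewrite a_eq b_eq mulr_natr; apply: (cmp2 (G := fun _ => 1)). Qed.
Lemma xy1 : x <= y.
Proof. exact: cmp1 dD_ge0. Qed.
Lemma xy2 : y <= x * (2 ^ s)%:R.
Proof. by rewrite mulr_natr; exact: cmp2 dD_ge0. Qed.
Lemma x_ge0 : 0 <= x.
Proof. by apply: sumr_ge0 => e _; apply: dD_ge0. Qed.
Lemma x_le : x <= 2 * a.
Proof.
rewrite a_eq mulr_sumr /x; apply: ler_sum => e _; rewrite mulr1; exact: dD_le2.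
Qed.

Lemma EN_eq : a * (1 - complex.Re (EN s N f)) = x.
Proof.
rewrite /EN Re_scal raddf_sum /= -/a mulrBr mulr1 mulrA mulfV ?mul1r; last first.
  by rewrite gt_eqF // a_gt0.
by rewrite a_eq /x /dD sumrB.
Qed.

Lemma gp_eq : b * (1 - complex.Re (gowers_pow s N f)) = y.
Proof.
have b0 : 0 < b by apply: lt_le_trans ab1; apply: a_gt0.
rewrite /gowers_pow Re_scal raddf_sum /= -/b mulrBr mulr1 mulrA mulfV ?mul1r; last first.
  by rewrite gt_eqF.
rewrite b_eq /y /dD sumrB; congr (_ - _); apply: eq_bigr => k hk.
exact: (Re_PK f hk).
Qed.

Lemma key1 : 1 - complex.Re (EN s N f) <= (2 ^ s)%:R * (1 - complex.Re (gowers_pow s N f)).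
Proof.
have := EN_eq; have := gp_eq; have := ab1; have := ab2; have := xy1; have := xy2;
have := x_ge0; have := a_gt0.
set c : R := (2 ^ s)%:R; have c0 : 0 <= c by [].
set u := 1 - complex.Re (EN _ _ _); set v := 1 - complex.Re (gowers_pow _ _ _) => ha hx hxy2 hxy1 hab2 hab1 hv hu.
have hb : 0 < b by apply: lt_le_trans hab1.
suff: a * b * u <= a * b * (c * v) by rewrite ler_pM2l // mulr_gt0.
have e1 : a * b * u = b * x by rewrite -hu; ring.
have e2 : a * b * (c * v) = (a * c) * y by rewrite -hv; ring.
rewrite e1 e2.
have h1 : b * x <= (a * c) * x by rewrite ler_wpM2r // mulrC.
have h2 : (a * c) * x <= (a * c) * y by rewrite ler_wpM2l // mulr_ge0 // ltW.
exact: le_trans h1 h2.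
Qed.

Lemma key2 : 1 - complex.Re (gowers_pow s N f) <= (2 ^ s)%:R * (1 - complex.Re (EN s N f)).
Proof.
have := EN_eq; have := gp_eq; have := ab1; have := ab2; have := xy1; have := xy2;
have := x_ge0; have := a_gt0.
set c : R := (2 ^ s)%:R; have c0 : 0 <= c by [].
set u := 1 - complex.Re (EN _ _ _); set v := 1 - complex.Re (gowers_pow _ _ _) => ha hx hxy2 hxy1 hab2 hab1 hv hu.
have hb : 0 < b by apply: lt_le_trans hab1.
suff: a * b * v <= a * b * (c * u) by rewrite ler_pM2l // mulr_gt0.
have e1 : a * b * v = a * y by rewrite -hv; ring.
have e2 : a * b * (c * u) = (b * c) * x by rewrite -hu; ring.
rewrite e1 e2.
have h1 : a * y <= a * (x * c) by rewrite ler_wpM2l // ltW.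
have h2 : a * (x * c) <= b * (x * c) by rewrite ler_wpM2r // mulr_ge0.
apply: (le_trans h1); apply: (le_trans h2); rewrite [x * c]mulrC mulrA; by [].
Qed.

Lemma key3 : -1 <= complex.Re (EN s N f).
Proof.
have := EN_eq; have := x_le; have := a_gt0.
set u := 1 - _ => ha hx hu.
have : a * u <= a * 2 by rewrite hu mulrC.
rewrite ler_pM2l // /u; lra.
Qed.

End Key.

Lemma gp_ge0 (R : realType) (s' N' : nat) (f : nat -> R[i]) :
  0 <= gowers_pow s'.+1 N'.+1 f.
Proof.
by rewrite /gowers_pow mulr_ge0 ?invr_ge0 ?ler0n //; exact: (Pi_sum_ge0 s' N' f).
Qed.

Unset Implicit Arguments.

Theorem lemma3p2 (R : realType) (s : nat) (hs : (2 <= s)%N) :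
  (forall C1 : R, 0 < C1 -> exists C2 : R, 0 < C2 /\
     forall (N : nat) (eps : R) (f : nat -> R[i]),
       (1 <= N)%N -> 0 < eps -> (forall n, `|f n| = 1) ->
       (((1 - C1 * eps)%:C)%C <= gowers s N f) ->
       1 - C2 * eps <= complex.Re (EN s N f)) /\
  (forall C2' : R, 0 < C2' -> exists C1' : R, 0 < C1' /\
     forall (N : nat) (eps : R) (f : nat -> R[i]),
       (1 <= N)%N -> 0 < eps -> (forall n, `|f n| = 1) ->
       1 - C2' * eps <= complex.Re (EN s N f) ->
       (((1 - C1' * eps)%:C)%C <= gowers s N f)).
Proof.
have hs0 : (0 < 2 ^ s)%N by rewrite expn_gt0.
set c : R := (2 ^ s)%:R.
have c1 : 1 <= c by rewrite /c ler1n.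
split.
- move=> C1 hC1; exists (c * c * C1 + 2 * C1); split; first by nra.
  move=> [|N'] eps f // _ heps hf hG.
  have k1 := key1 s N' hf; have k3 := key3 s N' hf.
  case: (lerP 0 (1 - C1 * eps)) => ht; last by nra.
  set t := 1 - C1 * eps in ht hG *.
  have gp : (((t ^+ (2 ^ s))%:C)%C <= gowers_pow s N'.+1 f).
    rewrite rmorphXn -(rootCK hs0 (gowers_pow s N'.+1 f)) -/(gowers s N'.+1 f).
    rewrite ler_pXn2r // qualifE /=; first by rewrite ler0c.
    apply: le_trans hG; by rewrite ler0c.
  move: gp; rewrite lecE => /andP [_ /= hgp].
  have hb := bernoulli (2 ^ s) ht (_ : t <= 1); rewrite -/c in hb.
  have hb' : 1 - complex.Re (gowers_pow s N'.+1 f) <= c * (C1 * eps).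
    have : t <= 1 by rewrite /t; nra.
    move=> /hb; rewrite /t; lra.
  have := ler_wpM2l (ltW (lt_le_trans ltr01 c1)) hb'.
  move: k1; nra.
- move=> C2' hC2'; exists (c * C2'); split; first by nra.
  move=> [|N'] eps f // _ heps hf hE.
  have k2 := key2 s N' hf.
  have hRe : 1 - c * C2' * eps <= complex.Re (gowers_pow s N'.+1 f).
    have : c * (1 - complex.Re (EN s N'.+1 f)) <= c * (C2' * eps).
      by rewrite ler_wpM2l ?(le_trans ler01 c1) //; lra.
    nra.
  have gpos : 0 <= gowers_pow s N'.+1 f.
    by case: (s) hs => [|s'] // _; exact: gp_ge0.
  have rpos : 0 <= gowers s N'.+1 f by rewrite /gowers rootC_ge0.
  have rR : ((complex.Re (gowers s N'.+1 f))%:C)%C = gowers s N'.+1 f.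
    by apply: RRe_real; apply: ger0_real.
  set r := gowers s N'.+1 f in rpos rR *.
  set rho := complex.Re r in rR.
  have rho0 : 0 <= rho by move: rpos; rewrite -rR ler0c.
  have hgp : gowers_pow s N'.+1 f = r ^+ (2 ^ s) by rewrite /r /gowers rootCK.
  have hgp' : complex.Re (r ^+ (2 ^ s)) = rho ^+ (2 ^ s).
    by rewrite -rR -rmorphXn.
  rewrite hgp hgp' in hRe.
  rewrite -rR lecR.
  case: (lerP 1 rho) => h1.
    apply: le_trans h1; have := mulr_gt0 (mulr_gt0 (lt_le_trans ltr01 c1) hC2') heps; lra.
  apply: (le_trans hRe); apply: ler_iXnr => //; exact: ltW.
Qed.
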